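(* Let $\Omega$ be either $\mathbb{C}$ with the Euclidean distance or $\mathbb{D}$ with the hyperbolic distance. For any line segment $I\subset\Omega$ and any locally doubling measure $\mu$ in $\Omega$, $\mu(I)=0$.
   Context: A positive measure $\mu$ on $\Omega$ is locally doubling if there is $C>1$ such that $\mu(B)\le C\mu(B')$ for every ball $B\subset\Omega$ (in the distance of $\Omega$) of radius smaller than $1$, where $B'$ is the ball with the same center and half the radius. *)

(* Defs.v *)
(* The complex plane C is modelled as R * R
   (z = (Re z, Im z)) with its product (= Borel) sigma-algebra. *)
From HB Require Import structures.
From mathcomp Require Import all_boot all_order all_algebra.
From mathcomp Require Import all_classical all_reals all_analysis.
Set Implicit Arguments. Unset Strict Implicit. Unset Printing Implicit Defensive.
Import Order.TTheory GRing.Theory Num.Theory.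
Local Open Scope classical_set_scope.
Local Open Scope ring_scope.

Section Defs.
Variable R : realType.
Local Notation C := (R * R)%type.

Definition cabs (z : C) : R := Num.sqrt (z.1 ^+ 2 + z.2 ^+ 2).
Definition csub (z w : C) : C := (z.1 - w.1, z.2 - w.2).
Definition cmul (z w : C) : C := (z.1 * w.1 - z.2 * w.2, z.1 * w.2 + z.2 * w.1).
Definition cconj (z : C) : C := (z.1, - z.2).
Definition cone : C := (1, 0).

Definition eucl_dist (z w : C) : R := cabs (csub z w).

Definition unit_disc : set C := [set z | cabs z < 1].

(* hyperbolic distance on D (curvature -1):
   d(z,w) = 2 artanh (|z - w| / |1 - conj(w) z|)
          = ln ((1 + t) / (1 - t)),  t = |z - w| / |1 - conj(w) z| *)
Definition hyp_dist (z w : C) : R :=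
  let t := cabs (csub z w) / cabs (csub cone (cmul (cconj w) z)) in
  ln ((1 + t) / (1 - t)).

Inductive omega_space := Plane | Disc.

Definition Omega (s : omega_space) : set C :=
  match s with Plane => setT | Disc => unit_disc end.

Definition dist (s : omega_space) : C -> C -> R :=
  match s with Plane => eucl_dist | Disc => hyp_dist end.

Definition oball (s : omega_space) (c : C) (r : R) : set C :=
  [set z | Omega s z /\ dist s c z < r].

Definition segment (a b : C) : set C :=
  [set z | exists2 t : R, 0 <= t <= 1 &
     z = ((1 - t) * a.1 + t * b.1, (1 - t) * a.2 + t * b.2)].

Definition locally_finite (s : omega_space) (mu : set C -> \bar R) : Prop :=
  forall c, Omega s c -> exists2 r : R, 0 < r & (mu (oball s c r) < +oo)%E.

Definition locally_doubling (s : omega_space) (mu : set C -> \bar R) : Prop :=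
  exists2 K : R, 1 < K & forall c r, Omega s c -> 0 < r -> r < 1 ->
    (mu (oball s c r) <= K%:E * mu (oball s c (r / 2)))%E.

End Defs.

(* Main.v *)
Require Import Defs.
From HB Require Import structures.
From mathcomp Require Import all_boot all_order all_algebra.
From mathcomp Require Import all_classical all_reals all_analysis.
From mathcomp Require Import ring lra.
From mathcomp Require Import measurable_realfun.
Import Order.TTheory GRing.Theory Num.Theory.
Local Open Scope classical_set_scope.
Local Open Scope ring_scope.

Section Aux.
Variable R : realType.
Local Notation T := (R * R)%type.

Lemma measurable_inv : measurable_fun [set: R] (@GRing.inv R).
Proof.
have -> : [set: R] = (`]-oo, 0[ `|` `]0, +oo[) `|` [set 0].
  apply/seteqP; split => x //= _.
  have [x0|x0|->] := ltgtP x 0; last by right.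
  - by left; left; rewrite /= in_itv.
  - by left; right; rewrite /= in_itv /= x0.
have m1 : measurable (`]-oo, 0[ `|` `]0, +oo[ : set R).
  by apply: measurableU; exact: measurable_itv.
apply/(measurable_funU _ m1 (measurable_set1 0)); split; last exact: measurable_fun_set1.
apply/(measurable_funU _ (measurable_itv _) (measurable_itv _)); split.
- apply: measurable_realfun.open_continuous_measurable_fun; first exact: interval_open.
  move=> x; rewrite inE /= in_itv /= => x0.
  by apply: inv_continuous; rewrite lt_eqF.
- apply: measurable_realfun.open_continuous_measurable_fun; first exact: interval_open.
  move=> x; rewrite inE /= in_itv /= andbT => x0.
  by apply: inv_continuous; rewrite gt_eqF.
Qed.

Definition mfun (f : T -> R) := measurable_fun [set: T] f.

Lemma mf_fst : mfun fst. Proof. exact: measurable_fst. Qed.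
Lemma mf_snd : mfun snd. Proof. exact: measurable_snd. Qed.
Lemma mf_cst c : mfun (fun _ => c). Proof. exact: measurable_cst. Qed.
Lemma mf_add f g : mfun f -> mfun g -> mfun (fun z => f z + g z).
Proof. exact: measurable_funD. Qed.
Lemma mf_sub f g : mfun f -> mfun g -> mfun (fun z => f z - g z).
Proof. exact: measurable_funB. Qed.
Lemma mf_mul f g : mfun f -> mfun g -> mfun (fun z => f z * g z).
Proof. exact: measurable_funM. Qed.
Lemma mf_opp f : mfun f -> mfun (fun z => - f z).
Proof. exact: measurable_funN. Qed.
Lemma mf_exp f n : mfun f -> mfun (fun z => f z ^+ n).
Proof. exact: measurable_funX. Qed.
Lemma mf_comp (h : R -> R) f : measurable_fun [set: R] h -> mfun f -> mfun (fun z => h (f z)).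
Proof. move=> mh mf; exact: (measurableT_comp mh mf). Qed.
Lemma mf_inv f : mfun f -> mfun (fun z => (f z)^-1).
Proof. move=> mf; exact: (@mf_comp (@GRing.inv R) f measurable_inv mf). Qed.
Lemma mf_sqrt f : mfun f -> mfun (fun z => Num.sqrt (f z)).
Proof. apply: mf_comp; apply: measurable_realfun.continuous_measurable_fun; exact: sqrt_continuous. Qed.
Lemma mf_ln f : mfun f -> mfun (fun z => ln (f z)).
Proof. apply: mf_comp; exact: measurable_realfun.measurable_ln. Qed.
Lemma mf_div f g : mfun f -> mfun g -> mfun (fun z => f z / g z).
Proof. by move=> mf mg; apply: mf_mul => //; apply: mf_inv. Qed.

Lemma mset_lt f g : mfun f -> mfun g -> measurable [set z | f z < g z].
Proof.
move=> mf mg; have := measurable_fun_ltr mf mg measurableT (Y:=[set true]) I.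
by rewrite setTI.
Qed.
Lemma mset_le f g : mfun f -> mfun g -> measurable [set z | f z <= g z].
Proof.
move=> mf mg; have := measurable_fun_ler mf mg measurableT (Y:=[set true]) I.
by rewrite setTI.
Qed.

Definition sqd (c z : T) := (c.1 - z.1)^+2 + (c.2 - z.2)^+2.
Definition EB (c : T) (r : R) := [set z : T | eucl_dist c z < r].

Lemma edE c z : eucl_dist c z = Num.sqrt (sqd c z).
Proof. by []. Qed.

Lemma EB_iff c r z : 0 < r -> EB c r z <-> sqd c z < r ^+ 2.
Proof.
move=> r0; rewrite /EB /= edE -{1}(ger0_norm (ltW r0)) -sqrtr_sqr ltr_sqrt //.
by rewrite exprn_gt0.
Qed.

Lemma mf_sqd c : mfun (sqd c).
Proof.
apply: mf_add; apply: mf_exp; apply: mf_sub; (apply: mf_cst || apply: mf_fst || apply: mf_snd).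
Qed.

Lemma mEB c r : measurable (EB c r).
Proof.
apply: (@mset_lt (fun z => eucl_dist c z) (fun _ => r)); last exact: mf_cst.
change (mfun (fun z => Num.sqrt (sqd c z))); apply: mf_sqrt. exact: mf_sqd.
Qed.

Variables a b : T.
Definition w1 := b.1 - a.1.
Definition w2 := b.2 - a.2.
Definition L2 := w1 ^+ 2 + w2 ^+ 2.
Definition Sc (z : T) := ((z.1 - a.1) * w1 + (z.2 - a.2) * w2) / L2.
Definition Tc (z : T) := ((z.2 - a.2) * w1 - (z.1 - a.1) * w2) / L2.
Definition Pt (s t : R) : T := (a.1 + s * w1 - t * w2, a.2 + s * w2 + t * w1).

Hypothesis hab : a != b.

Lemma L2_gt0 : 0 < L2.
Proof.
rewrite /L2 /w1 /w2; case: a b hab => [a1 a2] [b1 b2] /= hab'.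
have [e1|e1] := eqVneq (b1 - a1) 0.
  have [e2|e2] := eqVneq (b2 - a2) 0.
    move/negP: hab'; case; apply/eqP; congr pair.
    - by apply/eqP; rewrite eq_sym -subr_eq0 e1.
    - by apply/eqP; rewrite eq_sym -subr_eq0 e2.
  have h2 : 0 < (b2 - a2) ^+ 2 by rewrite lt_def sqrf_eq0 e2 sqr_ge0.
  have := sqr_ge0 (b1 - a1); lra.
have h1 : 0 < (b1 - a1) ^+ 2 by rewrite lt_def sqrf_eq0 e1 sqr_ge0.
have := sqr_ge0 (b2 - a2); lra.
Qed.

Lemma sqd_Pt s t z : sqd (Pt s t) z = ((Sc z - s) ^+ 2 + (Tc z - t) ^+ 2) * L2.
Proof.
have hL := L2_gt0.
rewrite /sqd /Pt /Sc /Tc /=. move: hL; rewrite /L2 => hL.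
field. by rewrite gt_eqF.
Qed.


Ltac mfauto := rewrite /mfun; repeat first [ apply: mf_add | apply: mf_sub | apply: mf_mul
  | apply: mf_exp | apply: mf_opp | apply: mf_inv | exact: mf_fst | exact: mf_snd | exact: mf_cst ].

Lemma mf_Sc : mfun Sc. Proof. rewrite /Sc; mfauto. Qed.
Lemma mf_Tc : mfun Tc. Proof. rewrite /Tc; mfauto. Qed.

Definition EBk s t k := EB (Pt s t) (k * Num.sqrt L2).

Lemma EBk_iff s t k z : 0 < k -> EBk s t k z <-> (Sc z - s) ^+ 2 + (Tc z - t) ^+ 2 < k ^+ 2.
Proof.
move=> k0; have hL := L2_gt0.
rewrite /EBk EB_iff ?mulr_gt0 ?sqrtr_gt0 // sqd_Pt exprMn sqr_sqrtr ?ltW //.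
by rewrite ltr_pM2r.
Qed.

Lemma mEBk s t k : measurable (EBk s t k).
Proof. exact: mEB. Qed.

Definition Tube d := [set z | - d < Sc z] `&` [set z | Sc z < 1 + d] `&`
   [set z | - d < Tc z] `&` [set z | Tc z < d].

Lemma mTube d : measurable (Tube d).
Proof.
apply: measurableI; [apply: measurableI; [apply: measurableI|]|];
 apply: mset_lt; (exact: mf_Sc || exact: mf_Tc || exact: mf_cst).
Qed.

Lemma Pt_Sc_Tc z : z = Pt (Sc z) (Tc z).
Proof.
have hL := L2_gt0; move: hL; rewrite /Pt /Sc /Tc /L2 => hL.
case: z => z1 z2 /=; congr pair; field; by rewrite gt_eqF.
Qed.

Lemma Sc_Pt s t : Sc (Pt s t) = s.
Proof.
have hL := L2_gt0; move: hL; rewrite /Pt /Sc /Tc /L2 => hL /=; field; by rewrite gt_eqF.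
Qed.

Lemma Tc_Pt s t : Tc (Pt s t) = t.
Proof.
have hL := L2_gt0; move: hL; rewrite /Pt /Sc /Tc /L2 => hL /=; field; by rewrite gt_eqF.
Qed.

Lemma segment_iff z : segment a b z <-> (0 <= Sc z /\ Sc z <= 1 /\ Tc z = 0).
Proof.
split.
  case=> th /andP[th0 th1] ->.
  have -> : ((1 - th) * a.1 + th * b.1, (1 - th) * a.2 + th * b.2) = Pt th 0.
    by rewrite /Pt /w1 /w2; congr pair; ring.
  by rewrite Sc_Pt Tc_Pt.
case=> h0 [h1 h2]; exists (Sc z); first by rewrite h0 h1.
rewrite {1}(Pt_Sc_Tc z) h2 /Pt /w1 /w2; congr pair; ring.
Qed.

Lemma mseg : measurable (segment a b).
Proof.
have -> : segment a b = [set z | 0 <= Sc z] `&` [set z | Sc z <= 1] `&`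
   [set z | Tc z <= 0] `&` [set z | 0 <= Tc z].
  apply/seteqP; split => z.
    by move/segment_iff => [h0 [h1 h2]]; rewrite /= h0 h1 h2 lexx.
  move=> [[[h0 h1] h2] h3]; apply/segment_iff; split => //; split => //.
  by apply/eqP; rewrite eq_le h2 h3.
apply: measurableI; [apply: measurableI; [apply: measurableI|]|];
 apply: mset_le; (exact: mf_Sc || exact: mf_Tc || exact: mf_cst).
Qed.

Lemma seg_Tube d : 0 < d -> segment a b `<=` Tube d.
Proof.
move=> d0 z /segment_iff [h0 [h1 h2]]; rewrite /Tube /= h2; split; [split; [split|]|]; lra.
Qed.


Definition Bj (N : nat) (j : nat) := EBk (j%:R / N%:R) 0 (2 / N%:R).
Definition Cj (N : nat) (j : nat) := EBk (j%:R / N%:R) (2 / N%:R) (1 / (2 * N%:R)).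

Lemma cover (N : nat) : (0 < N)%N ->
  Tube (N%:R^-1) `<=` \big[setU/set0]_(j < N.+1) Bj N j.
Proof.
move=> N0 z [[[h1 h2] h3] h4]; rewrite -bigcup_mkord.
have Nr : 0 < (N%:R : R) by rewrite ltr0n.
set u := (N%:R : R)^-1 in h1 h2 h3 h4.
have u0 : 0 < u by rewrite invr_gt0.
have hNu : N%:R * u = 1 by rewrite mulfV // gt_eqF.
have key : forall j : nat, (j <= N)%N -> 0 <= Sc z - j%:R * u < u \/ (- u < Sc z - j%:R * u <= 0) ->
   exists2 j0, (j0 < N.+1)%N & Bj N j0 z.
  move=> j jN hj; exists j => //.
  apply/EBk_iff; first by rewrite divr_gt0.
  change ((Sc z - j%:R * u) ^+ 2 + (Tc z - 0) ^+ 2 < (2 * u) ^+ 2).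
  rewrite subr0.
  have h3' : - u < Tc z := h3.
  have h4' : Tc z < u := h4.
  case: hj => /andP [ha hb]; nra.
have h1' : - u < Sc z := h1.
have h2' : Sc z < 1 + u := h2.
have [s0|s0] := leP (Sc z) 0.
  apply: (key 0%N) => //; right; rewrite mul0r subr0; lra.
have [s1|s1] := leP 1 (Sc z).
  apply: (key N) => //; left; rewrite hNu; lra.
have sN0 : 0 <= Sc z * N%:R by rewrite mulr_ge0 // ltW.
have := truncn_itv sN0; set j := Num.truncn _ => /andP [ja jb].
apply: (key j).
  by apply: ltnW; rewrite /j truncn_lt_nat // -{2}(mul1r N%:R) ltr_pM2r.
have ex : Sc z = Sc z * N%:R * u by rewrite -mulrA hNu mulr1.
rewrite -natr1 in jb.
left; rewrite ex; apply/andP; split; nra.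
Qed.


Lemma Cj_iff N j z : (0 < N)%N -> Cj N j z <->
  (Sc z - j%:R * N%:R^-1) ^+ 2 + (Tc z - 2 * N%:R^-1) ^+ 2 < (N%:R^-1 / 2) ^+ 2.
Proof.
move=> N0; have Nr : 0 < (N%:R : R) by rewrite ltr0n.
rewrite /Cj EBk_iff; last by rewrite divr_gt0 // mulr_gt0.
have -> : 1 / (2 * N%:R) = N%:R^-1 / 2 :> R by rewrite mul1r invfM mulrC.
by [].
Qed.

Lemma Cj_bounds N j z : (0 < N)%N -> Cj N j z ->
  j%:R * N%:R^-1 - N%:R^-1 / 2 < Sc z < j%:R * N%:R^-1 + N%:R^-1 / 2 /\
  2 * N%:R^-1 - N%:R^-1 / 2 < Tc z < 2 * N%:R^-1 + N%:R^-1 / 2.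
Proof.
move=> N0 /(Cj_iff _ _ _ N0); set u := N%:R^-1; set s := j%:R * u => h.
have u0 : 0 < u by rewrite invr_gt0 ltr0n.
have h1 : (Sc z - s) ^+ 2 < (u / 2) ^+ 2.
  by apply: le_lt_trans h; rewrite lerDl sqr_ge0.
have h2 : (Tc z - 2 * u) ^+ 2 < (u / 2) ^+ 2.
  by apply: le_lt_trans h; rewrite lerDr sqr_ge0.
split; apply/andP; split; nra.
Qed.

Lemma Cj_sub N j : (0 < N)%N -> (j <= N)%N -> Cj N j `<=` Tube (3 / N%:R).
Proof.
move=> N0 jN z /(Cj_bounds _ _ _ N0); set u := N%:R^-1 => -[/andP[s1 s2] /andP[t1 t2]].
have u0 : 0 < u by rewrite invr_gt0 ltr0n.
have j0 : 0 <= j%:R * u by rewrite mulr_ge0 // ltW.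
have j1 : j%:R * u <= 1.
  have hN : (N%:R : R) * u = 1 by rewrite /u mulfV // gt_eqF ?ltr0n.
  by rewrite -[X in _ <= X]hN ler_pM2r // ler_nat.
change (Tube (3 * u) z).
rewrite /Tube /=; split; [split; [split|]|]; lra.
Qed.

Lemma Cj_disj N j : (0 < N)%N -> Cj N j `&` Tube (N%:R^-1) = set0.
Proof.
move=> N0; apply/seteqP; split => // z [/(Cj_bounds _ _ _ N0) [_ /andP[t1 t2]] [_ t4]].
have u0 : 0 < (N%:R : R)^-1 by rewrite invr_gt0 ltr0n.
move: t4 => /= t4; lra.
Qed.

Lemma Cj_triv N : (0 < N)%N -> trivIset [set: 'I_N.+1] (fun i => Cj N i).
Proof.
move=> N0 i j _ _ [z [/(Cj_bounds _ _ _ N0) [/andP[s1 s2] _] /(Cj_bounds _ _ _ N0) [/andP[s3 s4] _]]].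
have Nr : 0 < (N%:R : R) by rewrite ltr0n.
have hij : forall p q : nat, (p%:R * N%:R^-1 - N%:R^-1 / 2 < Sc z) ->
   (Sc z < q%:R * N%:R^-1 + N%:R^-1 / 2 :> R) -> (p <= q)%N.
  move=> p q hp hq; rewrite -ltnS -(ltr_nat R) -natr1.
  have : p%:R * N%:R^-1 < (q%:R + 1) * N%:R^-1 :> R by rewrite mulrDl mul1r; lra.
  by rewrite ltr_pM2r // invr_gt0.
apply: val_inj; apply/eqP; rewrite eqn_leq (hij i j) ?(hij j i) //.
Qed.


Lemma enum_step (X Y Z : \bar R) (K : R) : 0 < K -> (0 <= X)%E -> (0 <= Y)%E ->
  (X <= K%:E * Y)%E -> (X + Y <= Z)%E -> (Z < +oo)%E ->
  (X < +oo)%E /\ fine X * (1 + K^-1) <= fine Z.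
Proof.
move=> K0; case: X => [x| |] //; case: Y => [y| |] //; case: Z => [z| |] //=;
  rewrite ?lee_fin => x0 y0; rewrite -?EFinM -?EFinD ?lee_fin //.
- move=> h1 h2 _; split; first exact: ltry.
  have hK : 0 < K^-1 by rewrite invr_gt0.
  have : x * K^-1 <= y.
    by rewrite ler_pdivrMr // mulrC.
  nra.
Qed.

Variable mu : {measure set T -> \bar R}.

Lemma sub_bigU n (F : nat -> set T) : (forall i, measurable (F i)) ->
  (mu (\big[setU/set0]_(i < n) F i) <= \sum_(i < n) mu (F i))%E.
Proof.
move=> mF; elim: n => [|n IH]; first by rewrite !big_ord0 measure0.
rewrite !big_ord_recr /=.
apply: le_trans (measureU2 _ _ _) _ => //.
- by apply: bigsetU_measurable => i _.
- by apply: leeD.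
Qed.


Lemma Tube_mono d d' : d <= d' -> Tube d `<=` Tube d'.
Proof.
move=> dd z [[[h1 h2] h3] h4]; move: h1 h2 h3 h4 => /= h1 h2 h3 h4.
rewrite /Tube /=; split; [split; [split|]|]; lra.
Qed.

Lemma step N K : (0 < N)%N -> 0 < K ->
  (forall j, (j <= N)%N -> (mu (Bj N j) <= K%:E * mu (Cj N j))%E) ->
  (mu (Tube (3 / N%:R)) < +oo)%E ->
  (mu (Tube N%:R^-1) < +oo)%E /\
  fine (mu (Tube N%:R^-1)) * (1 + K^-1) <= fine (mu (Tube (3 / N%:R))).
Proof.
move=> N0 K0 hBC hfin.
have Nr : 0 < (N%:R : R) by rewrite ltr0n.
set UC := \big[setU/set0]_(j < N.+1) Cj N j.
have mUC : measurable UC by apply: bigsetU_measurable => i _; exact: mEBk.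
apply: (@enum_step _ (mu UC)) => //.
- have mBU : measurable (\big[setU/set0]_(j < N.+1) Bj N j).
    by apply: bigsetU_measurable => i _; exact: mEBk.
  apply: (le_trans (le_measure mu _ _ (cover _ N0))); rewrite ?inE //; first exact: mTube.
  apply: (le_trans (sub_bigU N.+1 (Bj N) (fun i => mEBk _ _ _))).
  apply: (@le_trans _ _ (\sum_(i < N.+1) (K%:E * mu (Cj N i)))%E).
    by apply: lee_sum => i _; apply: hBC; rewrite -ltnS.
  rewrite -ge0_sume_distrr //.
  rewrite /UC (measure_bigsetU_ord mu xpredT (F := fun i : 'I_N.+1 => Cj N i)) //.
    by move=> i; exact: mEBk.
  exact: Cj_triv.
- have disj : Tube N%:R^-1 `&` UC = set0.
    apply/seteqP; split => // z [hz].
    rewrite /UC -bigcup_mkord => -[j _ hj].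
    by have := Cj_disj N j N0; rewrite setIC => /seteqP[+ _]; apply; split.
  rewrite -(measureU mu (mTube _) mUC disj).
  apply: le_measure; rewrite ?inE //.
  + by apply: measurableU => //; exact: mTube.
  + exact: mTube.
  rewrite subUset; split.
    apply: Tube_mono; rewrite ler_pdivlMr // mulVf ?gt_eqF //.
    lra.
  rewrite /UC -bigcup_mkord => z [j /= jN]; apply: Cj_sub => //.
Qed.


Lemma bernoulli (h : R) k : 0 <= h -> 1 + k%:R * h <= (1 + h) ^+ k.
Proof.
move=> h0; elim: k => [|k IH]; first by rewrite mul0r addr0 expr0.
rewrite exprS -natr1 mulrDl mul1r.
have hk : 0 <= k%:R * h by rewrite mulr_ge0.
nra.
Qed.

Lemma core K N0 : (0 < N0)%N -> 0 < K ->
  (forall N j, (N0 <= N)%N -> (j <= N)%N ->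
     (mu (Bj N j) <= K%:E * mu (Cj N j))%E /\ (mu (Bj N j) < +oo)%E) ->
  mu (segment a b) = 0%E.
Proof.
move=> N00 K0 H.
pose Nk k := (N0 * 3 ^ k)%N.
have Nk0 k : (0 < Nk k)%N by rewrite muln_gt0 N00 expn_gt0.
have Nkge k : (N0 <= Nk k)%N by rewrite /Nk leq_pmulr // expn_gt0.
have N3 k : 3 / (Nk k.+1)%:R = (Nk k)%:R^-1 :> R.
  rewrite /Nk expnS mulnCA natrM invfM mulrA mulfV ?mul1r //.
pose h := K^-1.
have h0 : 0 <= h by rewrite /h invr_ge0 ltW.
have base : (mu (Tube N0%:R^-1) < +oo)%E.
  apply: le_lt_trans (le_measure mu _ _ (cover _ N00)) _; rewrite ?inE.
  - exact: mTube.
  - by apply: bigsetU_measurable => i _; exact: mEBk.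
  apply: le_lt_trans (sub_bigU N0.+1 (Bj N0) (fun i => mEBk _ _ _)) _.
  apply: lte_sum_pinfty => i _.
  by have [] := H N0 i (leqnn _) (ltnSE (ltn_ord i)).
set M0 := fine (mu (Tube N0%:R^-1)).
have claim k : (mu (Tube (Nk k)%:R^-1) < +oo)%E /\
    fine (mu (Tube (Nk k)%:R^-1)) * (1 + h) ^+ k <= M0.
  elim: k => [|k [IH1 IH2]].
    by rewrite /Nk expn0 muln1 expr0 mulr1.
  have := @step (Nk k.+1) K (Nk0 _) K0.
  rewrite N3 => /(_ _ IH1) [].
    by move=> j jN; have [] := H _ j (Nkge _) jN.
  move=> fin1 ineq; split => //.
  apply: le_trans IH2.
  rewrite exprS mulrA ler_pM2r //; last by rewrite exprn_gt0 // ltr_wpDr.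
have mu0 : (0 <= mu (segment a b))%E by [].
have segfin : (mu (segment a b) < +oo)%E.
  apply: le_lt_trans base; apply: le_measure; rewrite ?inE.
  - exact: mseg.
  - exact: mTube.
  by apply: seg_Tube; rewrite invr_gt0 ltr0n.
rewrite -(fineK (x := mu (segment a b))); last by rewrite ge0_fin_numE.
set x := fine (mu (segment a b)).
have x0 : 0 <= x by apply: fine_ge0.
have xle k : x * (1 + h) ^+ k <= M0.
  have [c1 c2] := claim k.
  apply: le_trans c2; rewrite ler_pM2r; last by rewrite exprn_gt0 // ltr_wpDr.
  apply: fine_le; rewrite ?ge0_fin_numE //.
  apply: le_measure; rewrite ?inE.
  - exact: mseg.
  - exact: mTube.
  by apply: seg_Tube; rewrite invr_gt0 ltr0n.
have [->//|xpos] := eqVneq x 0.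
have xp : 0 < x by rewrite lt_def xpos x0.
have hp : 0 < h by rewrite /h invr_gt0.
pose k := (Num.truncn (M0 / (x * h))).+1.
have hk : M0 / (x * h) < k%:R by exact: truncnS_gt.
have := xle k; have := bernoulli h k h0.
have xh : 0 < x * h by rewrite mulr_gt0.
move: hk; rewrite ltr_pdivrMr // => hk b1 b2.
exfalso.
have b3 : x * (1 + k%:R * h) <= x * (1 + h) ^+ k by rewrite ler_pM2l.
nra.
Qed.


Lemma moball s (c : T) (r : R) : measurable (oball s c r).
Proof.
case: s.
  have -> : oball Plane c r = EB c r.
    by apply/seteqP; split => z /=; [case|split].
  exact: mEB.
have -> : oball Disc c r = [set z | cabs z < 1] `&` [set z | hyp_dist c z < r].
  by apply/seteqP; split => z /=.
apply: measurableI; apply: mset_lt; try exact: mf_cst.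
  rewrite /cabs; apply: mf_sqrt; mfauto.
rewrite /hyp_dist /cabs /csub /cmul /cconj /cone /=.
rewrite /mfun; repeat first [ apply: mf_ln | apply: mf_sqrt | apply: mf_add | apply: mf_sub | apply: mf_mul
  | apply: mf_exp | apply: mf_opp | apply: mf_inv | exact: mf_fst | exact: mf_snd | exact: mf_cst ].
Qed.

Lemma oball_mono s (c : T) (r r' : R) : r <= r' -> oball s c r `<=` oball s c r'.
Proof. by move=> rr z [h1 h2]; split => //; apply: lt_le_trans rr. Qed.

Lemma doubling_iter s (K : R) (c : T) (r : R) m : 0 < K -> Omega s c -> 0 < r -> r < 1 ->
  (forall c r, Omega s c -> 0 < r -> r < 1 ->
     (mu (oball s c r) <= K%:E * mu (oball s c (r / 2)))%E) ->
  (mu (oball s c r) <= (K ^+ m)%:E * mu (oball s c (r / 2 ^+ m)))%E.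
Proof.
move=> K0 Oc r0 r1 HD; elim: m => [|m IH]; first by rewrite expr0 divr1 mul1e.
apply: le_trans IH _.
have p0 : 0 < r / 2 ^+ m by rewrite divr_gt0 // exprn_gt0.
have p1 : r / 2 ^+ m < 1.
  apply: le_lt_trans r1; rewrite ler_pdivrMr ?exprn_gt0 //.
  have e2 : 1 <= (2:R) ^+ m by apply: exprn_ege1; lra.
  nra.
apply: (le_trans (lee_wpmul2l (x := (K ^+ m)%:E) _ (HD c _ Oc p0 p1))).
  by rewrite lee_fin exprn_ge0 ?ltW.
have -> : r / 2 ^+ m / 2 = r / 2 ^+ m.+1 by rewrite exprSr invfM mulrA.
by rewrite muleA -EFinM -exprSr.
Qed.

Lemma ball_fin s (K : R) (c : T) (r : R) : 0 < K -> locally_finite s mu ->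
  (forall c r, Omega s c -> 0 < r -> r < 1 ->
     (mu (oball s c r) <= K%:E * mu (oball s c (r / 2)))%E) ->
  Omega s c -> 0 < r -> r < 1 -> (mu (oball s c r) < +oo)%E.
Proof.
move=> K0 LF HD Oc r0 r1.
have [rc rc0 fc] := LF c Oc.
pose m := (Num.truncn (r / rc)).+1.
have hm : r / rc < m%:R by exact: truncnS_gt.
have b2 := bernoulli 1 m ler01.
apply: (le_lt_trans (@doubling_iter s K c r m K0 Oc r0 r1 HD)).
apply: lte_mul_pinfty; first by rewrite lee_fin exprn_ge0 ?ltW.
  by rewrite fin_numE.
apply: le_lt_trans fc; apply: le_measure; rewrite ?inE; try exact: moball.
apply: oball_mono; rewrite ler_pdivrMr ?exprn_gt0 //.
move: hm; rewrite ltr_pdivrMr // => hm.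
rewrite mulr1 in b2.
have : (1 + 1) ^+ m = (2 : R) ^+ m by [].
move=> e; rewrite e in b2.
have rcp : 0 <= rc by exact: ltW.
have : rc * (1 + m%:R) <= rc * 2 ^+ m by rewrite ler_pM2l.
nra.
Qed.


Lemma oball_plane (c : T) (r : R) : oball Plane c r = EB c r.
Proof. by apply/seteqP; split => z /=; [case|split]. Qed.

Lemma Bj_sub N j : (0 < N)%N -> Bj N j `<=` EBk (j%:R / N%:R) (2 / N%:R) (4 / N%:R).
Proof.
move=> N0 z hz.
have u0 : 0 < (N%:R : R)^-1 by rewrite invr_gt0 ltr0n.
have k2 : 0 < 2 / (N%:R : R) by rewrite divr_gt0 ?ltr0n.
have k4 : 0 < 4 / (N%:R : R) by rewrite divr_gt0 ?ltr0n.
have h := (EBk_iff _ _ _ _ k2).1 hz.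
apply/(EBk_iff _ _ _ _ k4).
move: h; rewrite subr0.
set p := Sc z - _; set t := Tc z.
have u2 : (2 / N%:R : R) = 2 * (N%:R)^-1 by [].
have u4 : (4 / N%:R : R) = 4 * (N%:R)^-1 by [].
move=> h; rewrite u4; rewrite u2 in h; nra.
Qed.

Lemma plane_H K : 1 < K -> locally_finite Plane mu ->
  (forall c r, Omega Plane c -> 0 < r -> r < 1 ->
     (mu (oball Plane c r) <= K%:E * mu (oball Plane c (r / 2)))%E) ->
  exists2 N0, (0 < N0)%N & forall N j, (N0 <= N)%N -> (j <= N)%N ->
     (mu (Bj N j) <= (K ^+ 3)%:E * mu (Cj N j))%E /\ (mu (Bj N j) < +oo)%E.
Proof.
move=> K1 LF HD.
have K0 : 0 < K by lra.
have L0 : 0 < Num.sqrt L2 by rewrite sqrtr_gt0 L2_gt0.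
exists (Num.truncn (4 * Num.sqrt L2)).+1 => // N j NN jN.
have N0 : (0 < N)%N by apply: leq_trans NN.
have Nr : 0 < (N%:R : R) by rewrite ltr0n.
have hN : 4 * Num.sqrt L2 < N%:R.
  apply: lt_le_trans (truncnS_gt _) _; by rewrite ler_nat.
have r4 : 4 / N%:R * Num.sqrt L2 < 1.
  by rewrite mulrC mulrA ltr_pdivrMr // mul1r mulrC.
have r4p : 0 < 4 / N%:R * Num.sqrt L2 by rewrite mulr_gt0 // divr_gt0.
split.
  apply: (le_trans (le_measure mu _ _ (Bj_sub _ j N0))); rewrite ?inE; try exact: mEBk.
  rewrite /EBk -oball_plane.
  apply: (le_trans (@doubling_iter Plane K _ _ 3 K0 I r4p r4 HD)).
  rewrite /Cj /EBk -oball_plane.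
  have -> : 4 / N%:R * Num.sqrt L2 / 2 ^+ 3 = 1 / (2 * N%:R) * Num.sqrt L2.
    by field; rewrite gt_eqF.
  by [].
rewrite /Bj /EBk -oball_plane.
apply: (@ball_fin Plane K _ _ K0 LF HD) => //.
  by rewrite mulr_gt0 // divr_gt0.
apply: le_lt_trans r4; rewrite ler_pM2r // ler_pM2r ?invr_gt0 //; lra.
Qed.


Lemma ln_lower (y : R) : 0 < y -> 1 - y^-1 <= ln y.
Proof.
move=> y0.
have h := @le_ln1Dx R (y^-1 - 1).
have e : 1 + (y^-1 - 1) = y^-1 by rewrite addrCA subrr addr0.
rewrite e in h.
have hx : -1 < y^-1 - 1 by rewrite ltrBrDr addrC subrr invr_gt0.
have := h hx; rewrite lnV ?posrE // => h2; lra.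
Qed.

Lemma hyp_ge (t : R) : 0 <= t -> t < 1 -> t <= ln ((1 + t) / (1 - t)).
Proof.
move=> t0 t1.
have y0 : 0 < (1 + t) / (1 - t) by rewrite divr_gt0; lra.
apply: (le_trans _ (ln_lower _ y0)).
rewrite invf_div.
have e : 1 - (1 - t) / (1 + t) = 2 * t / (1 + t) by field; lra.
rewrite e ler_pdivlMr; last lra.
nra.
Qed.

Lemma hyp_le (t : R) : 0 <= t -> t <= 1 / 2 -> ln ((1 + t) / (1 - t)) <= 4 * t.
Proof.
move=> t0 t1.
have e : (1 + t) / (1 - t) = 1 + 2 * t / (1 - t) by field; lra.
rewrite e; apply: le_trans (le_ln1Dx _) _.
  have : 0 <= 2 * t / (1 - t) by rewrite divr_ge0; lra.
  lra.
rewrite ler_pdivrMr; last lra.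
nra.
Qed.


Definition sq (z : T) := z.1 ^+ 2 + z.2 ^+ 2.
Definition Qcz (c z : T) := (1 - (z.1 * c.1 - - z.2 * c.2)) ^+ 2 + (0 - (z.1 * c.2 + - z.2 * c.1)) ^+ 2.

Lemma disc_iff (z : T) : unit_disc z <-> sq z < 1.
Proof.
rewrite /unit_disc /= /cabs -/(sq z) -{1}sqrtr1 ltr_sqrt //.
Qed.

Lemma hypE (c z : T) : hyp_dist c z =
  ln ((1 + Num.sqrt (sqd c z) / Num.sqrt (Qcz c z)) / (1 - Num.sqrt (sqd c z) / Num.sqrt (Qcz c z))).
Proof. by []. Qed.

Lemma Q_id (c z : T) : Qcz c z = sqd c z + (1 - sq c) * (1 - sq z).
Proof. rewrite /Qcz /sqd /sq; ring. Qed.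

Lemma sqrt_facts (x : R) : 0 <= x -> 0 <= Num.sqrt x /\ Num.sqrt x ^+ 2 = x.
Proof. by move=> x0; rewrite sqrtr_ge0 sqr_sqrtr. Qed.

Lemma D1 (c z : T) : sq c < 1 -> sq z < 1 -> eucl_dist c z <= 3 * hyp_dist c z.
Proof.
move=> hc hz; rewrite hypE edE.
have P0 : 0 <= sqd c z by rewrite /sqd addr_ge0 ?sqr_ge0.
have P4 : sqd c z < 4.
  have := sqr_ge0 (c.1 + z.1); have := sqr_ge0 (c.2 + z.2).
  move: hc hz; rewrite /sqd /sq => hc hz; nra.
have Qe := Q_id c z.
have prod0 : 0 < (1 - sq c) * (1 - sq z) by apply: mulr_gt0; lra.
have [sP0 sP2] := sqrt_facts _ P0.
have Q0 : 0 <= Qcz c z by lra.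
have [sQ0 sQ2] := sqrt_facts _ Q0.
set sP := Num.sqrt (sqd c z) in sP0 sP2 *; set sQ := Num.sqrt (Qcz c z) in sQ0 sQ2 *.
have sQp : 0 < sQ by rewrite lt_def sQ0 andbT; apply/eqP => e; rewrite e in sQ2; nra.
have sQ3 : sQ <= 3.
  have : sq c <= 1 by lra. have : sq z <= 1 by lra. have : 0 <= sq c by rewrite /sq addr_ge0 ?sqr_ge0.
  have : 0 <= sq z by rewrite /sq addr_ge0 ?sqr_ge0. nra.
have sPQ : sP < sQ by nra.
set t := sP / sQ.
have t0 : 0 <= t by rewrite divr_ge0.
have t1 : t < 1 by rewrite ltr_pdivrMr // mul1r.
apply: le_trans (_ : 3 * t <= _); last by rewrite ler_pM2l //; apply: hyp_ge.
rewrite /t mulrA ler_pdivlMr //; nra.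
Qed.


Lemma sq_ge0 (z : T) : 0 <= sq z.
Proof. by rewrite /sq addr_ge0 ?sqr_ge0. Qed.

Lemma D2 (c z : T) (M : R) : sq c <= M -> sq z <= M -> M < 1 ->
  eucl_dist c z <= (1 - M) / 2 -> hyp_dist c z <= 4 * eucl_dist c z / (1 - M).
Proof.
move=> hc hz M1; rewrite hypE edE => hd.
have P0 : 0 <= sqd c z by rewrite /sqd addr_ge0 ?sqr_ge0.
have Qe := Q_id c z.
have g0 : 0 < 1 - M by lra.
have sc0 := sq_ge0 c; have sz0 := sq_ge0 z.
have prod : (1 - M) ^+ 2 <= (1 - sq c) * (1 - sq z).
  rewrite expr2; apply: ler_pM; lra.
have [sP0 sP2] := sqrt_facts _ P0.
have Q0 : 0 <= Qcz c z by have := sqr_ge0 (1 - M); lra.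
have [sQ0 sQ2] := sqrt_facts _ Q0.
set sP := Num.sqrt (sqd c z) in sP0 sP2 hd *; set sQ := Num.sqrt (Qcz c z) in sQ0 sQ2 *.
have sQg : 1 - M <= sQ by nra.
have sQp : 0 < sQ by lra.
set t := sP / sQ.
have t0 : 0 <= t by rewrite divr_ge0.
have tle : t <= sP / (1 - M).
  rewrite /t ler_pdivrMr //.
  have ev : sP = sP / (1 - M) * (1 - M) by rewrite divfK // gt_eqF.
  rewrite {1}ev; apply: ler_wpM2l => //; rewrite divr_ge0 // ltW //.
have t12 : t <= 1 / 2.
  apply: le_trans tle _; rewrite ler_pdivrMr //; lra.
apply: (le_trans (hyp_le _ t0 t12)).
rewrite -mulrA ler_pM2l //.
Qed.


Lemma region_real (y1 y2 p1 p2 Mx d : R) : y1 ^+ 2 + y2 ^+ 2 <= Mx -> Mx < 1 -> 0 <= d ->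
  d <= 1 -> d <= (1 - Mx) / 8 -> p1 ^+ 2 + p2 ^+ 2 <= d ^+ 2 ->
  (y1 + p1) ^+ 2 + (y2 + p2) ^+ 2 <= (1 + Mx) / 2.
Proof.
move=> hy M1 d0 d1 d8 hp.
have lag : (y1 * p1 + y2 * p2) ^+ 2 <= (y1 ^+ 2 + y2 ^+ 2) * (p1 ^+ 2 + p2 ^+ 2).
  have : 0 <= (y1 * p2 - y2 * p1) ^+ 2 by apply: sqr_ge0.
  have e : (y1 ^+ 2 + y2 ^+ 2) * (p1 ^+ 2 + p2 ^+ 2) - (y1 * p1 + y2 * p2) ^+ 2
     = (y1 * p2 - y2 * p1) ^+ 2 by ring.
  lra.
have yp0 : 0 <= p1 ^+ 2 + p2 ^+ 2 by rewrite addr_ge0 ?sqr_ge0.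
have y0 : 0 <= y1 ^+ 2 + y2 ^+ 2 by rewrite addr_ge0 ?sqr_ge0.
have dot2 : (y1 * p1 + y2 * p2) ^+ 2 <= d ^+ 2.
  apply: (le_trans lag).
  have : (y1 ^+ 2 + y2 ^+ 2) * (p1 ^+ 2 + p2 ^+ 2) <= 1 * (p1 ^+ 2 + p2 ^+ 2).
    apply: ler_wpM2r => //; lra.
  lra.
have dot : y1 * p1 + y2 * p2 <= d by nra.
have e : (y1 + p1) ^+ 2 + (y2 + p2) ^+ 2 =
   (y1 ^+ 2 + y2 ^+ 2) + 2 * (y1 * p1 + y2 * p2) + (p1 ^+ 2 + p2 ^+ 2) by ring.
rewrite e.
have : d ^+ 2 <= d by rewrite expr2 -{3}(mul1r d) ler_wpM2r.
lra.
Qed.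

Definition Mx := Num.max (sq a) (sq b).
Definition dl := Num.min 1 ((1 - Mx) / 8).
Definition Mp := (1 + Mx) / 2.

Lemma sq_Pt0 s : 0 <= s <= 1 -> sq (Pt s 0) <= Mx.
Proof.
move=> /andP[s0 s1].
have ha : sq a <= Mx by rewrite /Mx le_max lexx.
have hb : sq b <= Mx by rewrite /Mx le_max lexx orbT.
have e : (1 - s) * sq a + s * sq b - sq (Pt s 0) = s * (1 - s) * L2.
  by rewrite /sq /Pt /L2 /w1 /w2 /=; ring.
have : 0 <= s * (1 - s) * L2 by rewrite mulr_ge0 ?mulr_ge0 ?subr_ge0 // ltW // L2_gt0.
have : (1 - s) * sq a <= (1 - s) * Mx by rewrite ler_wpM2l ?subr_ge0.
have : s * sq b <= s * Mx by rewrite ler_wpM2l.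
lra.
Qed.

Lemma region (z : T) (s : R) : Mx < 1 -> 0 <= s <= 1 ->
  ((Sc z - s) ^+ 2 + (Tc z) ^+ 2) * L2 <= dl ^+ 2 -> sq z <= Mp.
Proof.
move=> M1 hs hz.
have d0 : 0 <= dl by rewrite /dl le_min ler01 divr_ge0 //; lra.
have d1 : dl <= 1 by rewrite /dl ge_min lexx.
have d8 : dl <= (1 - Mx) / 8 by rewrite /dl ge_min lexx orbT.
have hy := sq_Pt0 _ hs.
have hp : sqd (Pt s 0) z <= dl ^+ 2 by rewrite sqd_Pt subr0.
have := @region_real (Pt s 0).1 (Pt s 0).2 (z.1 - (Pt s 0).1) (z.2 - (Pt s 0).2) Mx dl hy M1 d0 d1 d8.
have f1 : (Pt s 0).1 + (z.1 - (Pt s 0).1) = z.1 by ring.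
have f2 : (Pt s 0).2 + (z.2 - (Pt s 0).2) = z.2 by ring.
rewrite f1 f2 /Mp /sq; apply.
move: hp; rewrite /sqd.
have e1 : ((Pt s 0).1 - z.1) ^+ 2 = (z.1 - (Pt s 0).1) ^+ 2 by ring.
have e2 : ((Pt s 0).2 - z.2) ^+ 2 = (z.2 - (Pt s 0).2) ^+ 2 by ring.
by rewrite e1 e2.
Qed.


Lemma Mp_lt1 : Mx < 1 -> Mp < 1.
Proof. by rewrite /Mp => h; lra. Qed.

Lemma incl_EB_hyp (c : T) (r : R) : Mx < 1 -> sq c <= Mp -> 0 < r -> r <= (1 - Mp) / 2 ->
  (EB c r `<=` [set z | sq z <= Mp]) -> EB c r `<=` oball Disc c (4 * r / (1 - Mp)).
Proof.
move=> M1 hc r0 rg hreg z hz.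
have M1' := Mp_lt1 M1.
have hzM : sq z <= Mp := hreg z hz.
split; first by apply/disc_iff; lra.
have hz' : eucl_dist c z < r := hz.
have g0 : 0 < 1 - Mp by lra.
change (hyp_dist c z < 4 * r / (1 - Mp)).
apply: (le_lt_trans (D2 c z Mp hc hzM M1' _)); first lra.
rewrite ltr_pM2r ?invr_gt0 //; lra.
Qed.

Lemma incl_hyp_EB (c : T) (r : R) : sq c < 1 -> oball Disc c r `<=` EB c (3 * r).
Proof.
move=> hc z [/disc_iff hz hd].
have := D1 c z hc hz; rewrite /EB /=.
have hd' : hyp_dist c z < r := hd.
lra.
Qed.


Lemma EB_mono (c : T) (r r' : R) : r <= r' -> EB c r `<=` EB c r'.
Proof. by move=> rr z hz; apply: lt_le_trans rr. Qed.

Lemma disc_H (K : R) : 1 < K -> segment a b `<=` @unit_disc R -> locally_finite Disc mu ->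
  (forall c r, Omega Disc c -> 0 < r -> r < 1 ->
     (mu (oball Disc c r) <= K%:E * mu (oball Disc c (r / 2)))%E) ->
  exists2 K', 0 < K' & exists2 N0, (0 < N0)%N & forall N j, (N0 <= N)%N -> (j <= N)%N ->
     (mu (Bj N j) <= K'%:E * mu (Cj N j))%E /\ (mu (Bj N j) < +oo)%E.
Proof.
move=> K1 segD LF HD.
have K0 : 0 < K by lra.
have eA : Pt 0 0 = a by rewrite /Pt !mul0r subr0 !addr0 [RHS]surjective_pairing.
have eB : Pt 1 0 = b by rewrite /Pt /w1 /w2 [RHS]surjective_pairing; congr pair; ring.
have aD : sq a < 1.
  apply/disc_iff; apply: segD; apply/segment_iff; rewrite -eA Sc_Pt Tc_Pt; split => //; lra.
have bD : sq b < 1.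
  apply/disc_iff; apply: segD; apply/segment_iff; rewrite -eB Sc_Pt Tc_Pt; split => //; lra.
have M1 : Mx < 1 by rewrite /Mx gt_max aD bD.
have Mp1 := Mp_lt1 M1.
set g := 1 - Mp.
have g0 : 0 < g by rewrite /g; lra.
have dl0 : 0 < dl by rewrite /dl lt_min ltr01 divr_gt0 //; lra.
set sL := Num.sqrt L2.
have sL0 : 0 < sL by rewrite sqrtr_gt0 L2_gt0.
have sL2 : sL ^+ 2 = L2 by rewrite sqr_sqrtr // ltW // L2_gt0.
set e0 := Num.min (g / 32) (dl / 7).
have e00 : 0 < e0 by rewrite lt_min !divr_gt0.
pose m := (Num.truncn (96 / g)).+1.
have hm : 96 / g < 2 ^+ m.
  apply: lt_le_trans (truncnS_gt _) _.
  have := bernoulli 1 m ler01; rewrite mulr1 => hb.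
  have e2 : (1 + 1) ^+ m = (2 : R) ^+ m by [].
  rewrite e2 in hb; rewrite -/m; lra.
exists (K ^+ m); first by rewrite exprn_gt0.
exists (Num.truncn (sL / e0)).+1 => // N j NN jN.
have N0 : (0 < N)%N by apply: leq_trans NN.
have Nr : 0 < (N%:R : R) by rewrite ltr0n.
set u := (N%:R : R)^-1.
have u0 : 0 < u by rewrite invr_gt0.
set rho := u * sL.
have rho0 : 0 < rho by rewrite mulr_gt0.
have hrho : rho < e0.
  have h : sL / e0 < N%:R.
    by apply: lt_le_trans (truncnS_gt _) _; rewrite ler_nat.
  move: h; rewrite ltr_pdivrMr // => h.
  rewrite /rho /u mulrC ltr_pdivrMr // mulrC //.
have rg : rho < g / 32 by move: hrho; rewrite lt_min => /andP[].
have rd : rho < dl / 7 by move: hrho; rewrite lt_min => /andP[].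
have ju0 : 0 <= j%:R * u <= 1.
  apply/andP; split; first by rewrite mulr_ge0 // ltW.
  have hN : (N%:R : R) * u = 1 by rewrite /u mulfV // gt_eqF.
  by rewrite -[X in _ <= X]hN ler_pM2r // ler_nat.
have rho2 : rho ^+ 2 = u ^+ 2 * L2 by rewrite /rho exprMn sL2.
set c := Pt (j%:R * u) (2 * u).
set x := Pt (j%:R * u) 0.
have regc : sq c <= Mp.
  apply: (region _ (j%:R * u) M1 ju0); rewrite Sc_Pt Tc_Pt subrr.
  nra.
have regx : sq x <= Mp.
  apply: (region _ (j%:R * u) M1 ju0); rewrite Sc_Pt Tc_Pt subrr.
  nra.
have reg4 : EB c (4 * rho) `<=` [set z | sq z <= Mp].
  move=> z hz.
  have k4 : 0 < 4 * u by rewrite mulr_gt0.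
  have hz' : EBk (j%:R * u) (2 * u) (4 * u) z by rewrite /EBk -mulrA.
  move/(EBk_iff _ _ _ _ k4): hz' => hz'.
  apply: (region _ (j%:R * u) M1 ju0).
  set A := Sc z - j%:R * u in hz' *; set B := Tc z in hz' *.
  have h1 : A ^+ 2 + B ^+ 2 <= 40 * u ^+ 2.
    have := sqr_ge0 (B - 4 * u); nra.
  have L0 : 0 < L2 := L2_gt0.
  have : (A ^+ 2 + B ^+ 2) * L2 <= 40 * u ^+ 2 * L2 by rewrite ler_pM2r.
  nra.
have regB : EB x (2 * rho) `<=` [set z | sq z <= Mp].
  move=> z hz.
  have k2 : 0 < 2 * u by rewrite mulr_gt0.
  have hz' : EBk (j%:R * u) 0 (2 * u) z by rewrite /EBk -mulrA.
  move/(EBk_iff _ _ _ _ k2): hz' => hz'.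
  apply: (region _ (j%:R * u) M1 ju0).
  rewrite subr0 in hz'.
  set A := Sc z - j%:R * u in hz' *; set B := Tc z in hz' *.
  have L0 : 0 < L2 := L2_gt0.
  have : (A ^+ 2 + B ^+ 2) * L2 <= (2 * u) ^+ 2 * L2 by rewrite ler_pM2r // ltW.
  nra.
have eBj : Bj N j = EB x (2 * rho) by rewrite /Bj /EBk /rho mulrA.
have eCj : Cj N j = EB c (rho / 2).
  rewrite /Cj /EBk /rho /c /u /sL; congr EB; field; by rewrite gt_eqF.
have e4 : EBk (j%:R / N%:R) (2 / N%:R) (4 / N%:R) = EB c (4 * rho) by rewrite /EBk /rho mulrA.
have cD : sq c < 1 by lra.
have xD : sq x < 1 by lra.
split.
- apply: (le_trans (le_measure mu _ _ (Bj_sub _ j N0))); rewrite ?inE; try exact: mEBk.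
  rewrite e4.
  have r4 : 4 * rho <= g / 2 by lra.
  have r4p : 0 < 4 * rho by rewrite mulr_gt0.
  have i1 := incl_EB_hyp _ _ M1 regc r4p r4 reg4.
  apply: (le_trans (le_measure mu _ _ i1)); rewrite ?inE; try exact: mEB; try exact: moball.
  have r1p : 0 < 4 * (4 * rho) / g by rewrite divr_gt0 // mulr_gt0.
  have r1 : 4 * (4 * rho) / g < 1 by rewrite ltr_pdivrMr //; lra.
  have cO : Omega Disc c by apply/disc_iff.
  apply: (le_trans (@doubling_iter Disc K c _ m K0 cO r1p r1 HD)).
  apply: lee_wpmul2l; first by rewrite lee_fin exprn_ge0 ?ltW.
  have i2 := incl_hyp_EB c (4 * (4 * rho) / g / 2 ^+ m) cD.
  apply: (le_trans (le_measure mu _ _ i2)); rewrite ?inE; try exact: mEB; try exact: moball.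
  rewrite eCj; apply: le_measure; rewrite ?inE; try exact: mEB.
  apply: EB_mono.
  have p2 : 0 < (2 : R) ^+ m by rewrite exprn_gt0.
  have hm' : 96 < g * 2 ^+ m by move: hm; rewrite ltr_pdivrMr // mulrC.
  have e : 3 * (4 * (4 * rho) / g / 2 ^+ m) = 48 * rho / (g * 2 ^+ m).
    by field; rewrite !gt_eqF.
  rewrite e ler_pdivrMr ?mulr_gt0 //; nra.
- rewrite eBj.
  have r2 : 2 * rho <= g / 2 by lra.
  have r2p : 0 < 2 * rho by rewrite mulr_gt0.
  have i1 := incl_EB_hyp _ _ M1 regx r2p r2 regB.
  apply: (le_lt_trans (le_measure mu _ _ i1)); rewrite ?inE; try exact: mEB; try exact: moball.
  apply: (@ball_fin Disc K _ _ K0 LF HD); first exact/disc_iff.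
    by rewrite divr_gt0 // mulr_gt0.
  by rewrite ltr_pdivrMr // -/g; lra.
Qed.

End Aux.

Theorem lemma2 (R : realType) (s : omega_space)
    (mu : {measure set (R * R)%type -> \bar R}) (a b : (R * R)%type) :
  a <> b -> segment a b `<=` Omega s ->
  locally_finite s mu -> locally_doubling s mu ->
  mu (segment a b) = 0%E.
Proof.
move=> hab segO LF [K K1 HD].
have hab' : a != b by apply/eqP.
case: s segO LF HD => segO LF HD.
- have [N0 N00 H] := @plane_H R a b hab' mu K K1 LF HD.
  apply: (@core R a b hab' mu (K ^+ 3) N0 N00 _ H).
  by rewrite exprn_gt0 // (lt_trans ltr01 K1).
- have [K' K'0 [N0 N00 H]] := @disc_H R a b hab' mu K K1 segO LF HD.
  exact: (@core R a b hab' mu K' N0 N00 K'0 H).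
Qed.
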